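(* For every real constant $c>0$, the function $$L_c(\alpha,\mathbf p)\;=\;-c\,\log \sum_{\mathbf x\models\alpha}\ \prod_{i:\,\mathbf x\models X_i}\mathbf p_i\prod_{i:\,\mathbf x\models\neg X_i}(1-\mathbf p_i)$$ (where the sum ranges over all states $\mathbf x\in\{0,1\}^V$ satisfying $\alpha$, $V$ being the index set of $\mathbf p$) satisfies all of the axioms (A1)–(A8) listed in the context. Conversely, every function $L$ satisfying all of the axioms (A1)–(A8) is equal to $L_c$ for some constant $c>0$. In other words, the semantic loss is the unique function satisfying (A1)–(A8), up to a positive multiplicative constant.
   Context: Setting: For a finite set $V$ of Boolean variables, a sentence over $V$ is a propositional formula built from variables in $V$ with the usual connectives; $\mathit{true}$ denotes the constant true sentence. A state $\mathbf x$ is an assignment in $\{0,1\}^V$; it is identified both with the sentence that is the conjunction of the literals it makes true, and with the vector $\mathbf x\in\{0,1\}^V\subseteq[0,1]^V$. We write $\mathbf x\models\alpha$ if $\mathbf x$ satisfies $\alpha$, $\alpha\models\beta$ if every state satisfying $\alpha$ satisfies $\beta$, and $\alpha\equiv\beta$ if both $\alpha\models\beta$ and $\beta\models\alpha$. A loss function $L$ assigns to every finite variable set $V$, every vector $\mathbf p\in[0,1]^V$ (where $\mathbf p_i$ is the probability of variable $X_i$) and every sentence $\alpha$ whose variables lie in $V$ a value $L(\alpha,\mathbf p)\in\mathbb R\cup\{+\infty\}$. Logarithms are natural, with $-\log 0=+\infty$ and $K^{-\infty}=0$. If $\mathbf p\in[0,1]^X$ and $\mathbf q\in[0,1]^Y$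 with $X,Y$ disjoint, $[\mathbf p\,\mathbf q]\in[0,1]^{X\cup Y}$ is their concatenation. Axioms: (A1) Truth: $L(\mathit{true},\mathbf p)=0$ for all $\mathbf p$. (A2) Additive independence: if $\alpha$ is a sentence over $X$, $\beta$ a sentence over $Y$ with $X\cap Y=\emptyset$, $\mathbf p\in[0,1]^X$, $\mathbf q\in[0,1]^Y$, then $L(\alpha\wedge\beta,[\mathbf p\,\mathbf q])=L(\alpha,\mathbf p)+L(\beta,\mathbf q)$. (A3) Monotonicity: if $\alpha\models\beta$ then $L(\alpha,\mathbf p)\ge L(\beta,\mathbf p)$ for all $\mathbf p$. (A4) Identity: for every state $\mathbf x$, $L(\mathbf x,\mathbf x)=0$ (sentence vs. deterministic vector). (A5) Label-literal correspondence: for each variable $X$ there are real constants $K,K'$ such that for every $p\in[0,1]$ (a vector over $\{X\}$), $L(X,p)=-K\log p$ and $L(\neg X,p)=-K'\log(1-p)$. (A6) Value symmetry: $L(\alpha,\mathbf p)=L(\bar\alpha,\mathbf 1-\mathbf p)$, where $\bar\alpha$ replaces every variable in $\alpha$ by its negation and $\mathbf 1-\mathbf p$ is taken componentwise. (A7) Variable symmetry: for a permutation $\pi$ of the variable set $V$ of $\mathbf p$, $L(\alpha,\mathbf p)=L(\pi(\alpha),\pi(\mathbf p))$, where $\pi(\alpha)$ renames each variable $X$ to $\pi(X)$ and $\pi(\mathbf p)$ is the correspondingly permuted vector. (A8) Exponential additivity: there is a constant $K>0$ such that for all $\mathbf p$ and all sentences $\alpha,\beta$ with $\alpha\wedge\beta$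 unsatisfiable, $K^{-L(\alpha\vee\beta,\mathbf p)}=K^{-L(\alpha,\mathbf p)}+K^{-L(\beta,\mathbf p)}$. *)

(* Defs.v *)
From HB Require Import structures.
From mathcomp Require Import all_boot all_order all_algebra.
From mathcomp Require Import finmap.
From mathcomp Require Import all_classical all_reals all_analysis.

Set Implicit Arguments.
Unset Strict Implicit.
Unset Printing Implicit Defensive.

Import Order.TTheory GRing.Theory Num.Theory.
Local Open Scope ring_scope.

Inductive form : Type :=
  | Var : nat -> form
  | Tru : form
  | Fls : form
  | Neg : form -> form
  | And : form -> form -> form
  | Or  : form -> form -> form
  | Imp : form -> form -> form.

Fixpoint eval (x : nat -> bool) (f : form) : bool :=
  match f with
  | Var i => x i
  | Tru => true
  | Fls => false
  | Neg g => ~~ eval x g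
  | And g h => eval x g && eval x h
  | Or g h => eval x g || eval x h
  | Imp g h => eval x g ==> eval x h
  end.

Fixpoint vars (f : form) : seq nat :=
  match f with
  | Var i => [:: i]
  | Tru | Fls => [::]
  | Neg g => vars g
  | And g h | Or g h | Imp g h => vars g ++ vars h
  end.

Definition over (V : {fset nat}) (f : form) : Prop :=
  forall i, i \in vars f -> i \in V.

Definition entails (a b : form) : Prop := forall x : nat -> bool, eval x a -> eval x b.

Fixpoint negvars (f : form) : form :=
  match f with
  | Var i => Neg (Var i)
  | Tru => Tru
  | Fls => Fls
  | Neg g => Neg (negvars g)
  | And g h => And (negvars g) (negvars h)
  | Or g h => Or (negvars g) (negvars h)
  | Imp g h => Imp (negvars g) (negvars h)
  end.

Fixpoint rename (pi : nat -> nat) (f : form) : form :=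
  match f with
  | Var i => Var (pi i)
  | Tru => Tru
  | Fls => Fls
  | Neg g => Neg (rename pi g)
  | And g h => And (rename pi g) (rename pi h)
  | Or g h => Or (rename pi g) (rename pi h)
  | Imp g h => Imp (rename pi g) (rename pi h)
  end.

Definition state_sent (V : {fset nat}) (x : nat -> bool) : form :=
  foldr (fun i acc => And (if x i then Var i else Neg (Var i)) acc) Tru
        (enum_fset V).

Definition state_vec (R : realType) (x : nat -> bool) : nat -> R :=
  fun i => if x i then 1 else 0.

Section Loss.
Variable R : realType.

(* A vector p in [0,1]^V is modelled by a function nat -> R whose values on V
   lie in [0,1]; values outside V are irrelevant (see locality below). *)
Definition unit_vec (V : {fset nat}) (p : nat -> R) : Prop :=
  forall i, i \in V -> 0 <= p i <= 1.

Definition valid (V : {fset nat}) (a : form) (p : nat -> R) : Prop :=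
  over V a /\ unit_vec V p.

Definition lossT := {fset nat} -> form -> (nat -> R) -> \bar R.

Local Open Scope ereal_scope.

(* -log r, with -log 0 = +oo *)
Definition nlog (r : R) : \bar R := if r == 0%R then +oo else (- ln r)%:E.

(* K^(-l), with K^(-oo) = 0 *)
Definition epow (K : R) (l : \bar R) : R :=
  match l with
  | EFin r => (K `^ (- r))%R
  | _ => 0%R
  end.

Definition is_loss (L : lossT) : Prop :=
  (forall V a p, valid V a p -> L V a p != -oo) /\
  (forall V a p q, valid V a p -> unit_vec V q ->
     (forall i, i \in V -> p i = q i) -> L V a p = L V a q).

Definition A1 (L : lossT) : Prop :=
  forall V p, unit_vec V p -> L V Tru p = 0.

Definition A2 (L : lossT) : Prop :=
  forall (X Y : {fset nat}) a b p q,
    [disjoint X & Y]%fset -> valid X a p -> valid Y b q ->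
    L (X `|` Y)%fset (And a b) (fun i => if i \in X then p i else q i)
    = L X a p + L Y b q.

Definition A3 (L : lossT) : Prop :=
  forall V a b p, valid V a p -> over V b -> entails a b -> L V b p <= L V a p.

Definition A4 (L : lossT) : Prop :=
  forall V (x : nat -> bool), L V (state_sent V x) (state_vec R x) = 0.

Definition A5 (L : lossT) : Prop :=
  forall X : nat, exists K K' : R, forall p : nat -> R, (0 <= p X <= 1)%R ->
    L [fset X]%fset (Var X) p = K%:E * nlog (p X) /\
    L [fset X]%fset (Neg (Var X)) p = K'%:E * nlog (1 - p X)%R.

Definition A6 (L : lossT) : Prop :=
  forall V a p, valid V a p -> L V a p = L V (negvars a) (fun i => 1 - p i)%R.

(* pi is a permutation of V with inverse sigma; pi(p) = p o sigma,
   i.e. pi(p)_{pi X} = p_X. *)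
Definition A7 (L : lossT) : Prop :=
  forall V a p (pi sigma : nat -> nat),
    (forall i, i \in V -> pi i \in V) -> (forall i, i \in V -> sigma i \in V) ->
    (forall i, i \in V -> sigma (pi i) = i) -> (forall i, i \in V -> pi (sigma i) = i) ->
    valid V a p -> L V a p = L V (rename pi a) (fun j => p (sigma j)).

Definition A8 (L : lossT) : Prop :=
  exists K : R, (0 < K)%R /\
    forall V a b p, valid V a p -> over V b ->
      (forall x : nat -> bool, ~~ (eval x a && eval x b)) ->
      epow K (L V (Or a b) p) = (epow K (L V a p) + epow K (L V b p))%R.

Definition axioms (L : lossT) : Prop :=
  A1 L /\ A2 L /\ A3 L /\ A4 L /\ A5 L /\ A6 L /\ A7 L /\ A8 L.

(* The semantic loss L_c: states x in {0,1}^V are encoded by the subset S of V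
   of variables they make true. *)
Definition wmc (V : {fset nat}) (a : form) (p : nat -> R) : R :=
  (\sum_(S <- fpowerset V | eval (fun i => i \in S) a)
     ((\prod_(i <- V | i \in S) p i) * (\prod_(i <- V | i \notin S) (1 - p i))))%R.

Definition Lsem (c : R) : lossT := fun V a p => c%:E * nlog (wmc V a p).

End Loss.

(* Main.v *)
Require Import Defs.
From HB Require Import structures.
From mathcomp Require Import all_boot all_order all_algebra.
From mathcomp Require Import finmap.
From mathcomp Require Import all_classical all_reals all_analysis.
Import Order.TTheory GRing.Theory Num.Theory.
Local Open Scope ring_scope.
Import Defs.
From mathcomp Require Import ring lra.

Lemma eval_ext (x y : nat -> bool) (a : form) :
  (forall i, i \in vars a -> x i = y i) -> eval x a = eval y a.
Proof.
elim: a => //= [i|g IH|g IHg h IHh|g IHg h IHh|g IHg h IHh] H.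
- by apply: H; rewrite inE.
- by rewrite IH.
- by rewrite IHg ?IHh // => i Hi; apply: H; rewrite mem_cat Hi ?orbT.
- by rewrite IHg ?IHh // => i Hi; apply: H; rewrite mem_cat Hi ?orbT.
- by rewrite IHg ?IHh // => i Hi; apply: H; rewrite mem_cat Hi ?orbT.
Qed.

Lemma eval_over (V : {fset nat}) (x y : nat -> bool) (a : form) :
  over V a -> (forall i, i \in V -> x i = y i) -> eval x a = eval y a.
Proof. by move=> Ha H; apply: eval_ext => i /Ha; apply: H. Qed.

Lemma eval_negvars x a : eval x (negvars a) = eval (fun i => ~~ x i) a.
Proof. by elim: a => //= [g ->|g -> h ->|g -> h ->|g -> h ->]. Qed.

Lemma eval_rename x pi a : eval x (rename pi a) = eval (fun i => x (pi i)) a.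
Proof. by elim: a => //= [g ->|g -> h ->|g -> h ->|g -> h ->]. Qed.

Definition stl (l : seq nat) (x : nat -> bool) : form :=
  foldr (fun i acc => And (if x i then Var i else Neg (Var i)) acc) Tru l.

Lemma state_stl V x : state_sent V x = stl (enum_fset V) x.
Proof. by []. Qed.

Lemma eval_stl y l x : eval y (stl l x) = all (fun i => y i == x i) l.
Proof.
elim: l => //= i l ->; congr (_ && _).
by case: (x i) => /=; case: (y i).
Qed.

Lemma vars_stl l x i : i \in vars (stl l x) -> i \in l.
Proof.
elim: l => //= j l IH; rewrite mem_cat inE.
case/orP => [|/IH ->]; last by rewrite orbT.
by case: (x j) => /=; rewrite inE => ->.
Qed.

Lemma over_state V x : over V (state_sent V x).
Proof. by move=> i /vars_stl. Qed.

Definition disj (fs : seq form) : form := foldr Or Fls fs.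

Lemma eval_disj x fs : eval x (disj fs) = has (eval x) fs.
Proof. by elim: fs => //= f fs ->. Qed.

Lemma over_disj V (T : eqType) (g : T -> form) (l : seq T) :
  (forall S, S \in l -> over V (g S)) -> over V (disj (map g l)).
Proof.
elim: l => [|S l IH] H i //=.
rewrite mem_cat => /orP[]; first by apply: H; rewrite inE eqxx.
by apply: IH => T' HT; apply: H; rewrite inE HT orbT.
Qed.

Lemma perm_inv (T : eqType) (l : seq T) (f g : T -> T) :
  uniq l -> {in l, forall x, f x \in l} -> {in l, forall x, g x \in l} ->
  {in l, cancel f g} -> {in l, cancel g f} -> perm_eq l (map f l).
Proof.
move=> ul fl gl fK gK; apply: uniq_perm => //.
  rewrite map_inj_in_uniq // => x y xl yl Exy.
  by rewrite -(fK x xl) -(fK y yl) Exy.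
move=> x; apply/idP/idP => [xl|/mapP [y yl ->]]; last exact: fl.
by rewrite -(gK x xl); apply: map_f; apply: gl.
Qed.

Lemma fsetU_perm (X Y : {fset nat}) :
  [disjoint X & Y]%fset -> perm_eq (enum_fset (X `|` Y)%fset) (enum_fset X ++ enum_fset Y).
Proof.
move=> /fdisjointP dXY; apply: uniq_perm.
- exact: fset_uniq.
- rewrite cat_uniq !fset_uniq /= andbT; apply/hasPn => i iY /=.
  by apply/negP => /dXY; rewrite iY.
- by move=> i; rewrite mem_cat in_fsetU.
Qed.

Section Comb.
Variable R : realType.

Lemma sum_split (X Y : {fset nat}) (F : {fset nat} -> R) :
  [disjoint X & Y]%fset ->
  \sum_(S <- fpowerset (X `|` Y)%fset) F S =
  \sum_(S1 <- fpowerset X) \sum_(S2 <- fpowerset Y) F (S1 `|` S2)%fset.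
Proof.
move=> dXY; have dXY' := dXY; move/fdisjointP: dXY' => dP.
rewrite -(big_allpairs_dep (h := fun S1 S2 => (S1 `|` S2)%fset)).
apply: perm_big; apply: uniq_perm.
- exact: fset_uniq.
- apply: allpairs_uniq; try exact: fset_uniq.
  move=> [S1 S2] [T1 T2] /allpairsP [[A1 A2] /= [HA1 HA2 [-> ->]]].
  move=> /allpairsP [[B1 B2] /= [HB1 HB2 [-> ->]]] /= E.
  move: HA1 HA2 HB1 HB2; rewrite !fpowersetE => /fsubsetP s1 /fsubsetP s2 /fsubsetP t1 /fsubsetP t2.
  have key : forall (U1 U2 : {fset nat}), {subset U1 <= X} -> {subset U2 <= Y} ->
     forall i, (i \in U1) = (i \in (U1 `|` U2)%fset) && (i \in X)
            /\ (i \in U2) = (i \in (U1 `|` U2)%fset) && (i \in Y).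
    move=> U1 U2 u1 u2 i; rewrite in_fsetU; split.
      case iU1: (i \in U1) => /=; first by rewrite (u1 _ iU1).
      case iU2: (i \in U2) => //=; case iX: (i \in X) => //.
      by have := dP _ iX; rewrite (u2 _ iU2).
    case iU2: (i \in U2) => /=; first by rewrite orbT (u2 _ iU2).
    rewrite orbF; case iU1: (i \in U1) => //=; case iY: (i \in Y) => //.
    by have := dP _ (u1 _ iU1); rewrite iY.
  congr (_, _); apply/fsetP => i.
    by rewrite (key _ _ s1 s2 i).1 (key _ _ t1 t2 i).1 E.
  by rewrite (key _ _ s1 s2 i).2 (key _ _ t1 t2 i).2 E.
- move=> S; rewrite fpowersetE; apply/idP/idP.
    move=> /fsubsetP sS; apply/allpairsP; exists ((S `&` X)%fset, (S `&` Y)%fset) => /=.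
    split; rewrite ?fpowersetE ?fsubsetIr //.
    apply/fsetP => i; rewrite !in_fsetU !in_fsetI -andb_orr.
    by case iS: (i \in S) => //=; rewrite -in_fsetU sS.
  move=> /allpairsP [[A1 A2] /= [HA1 HA2 ->]]; move: HA1 HA2; rewrite !fpowersetE.
  by move=> h1 h2; apply: fsetUSS.
Qed.
End Comb.

Section W.
Variable R : realType.
Implicit Types (p q : nat -> R) (V X Y S : {fset nat}).

Definition weight V S p : R := \prod_(i <- V) (if i \in S then p i else 1 - p i).

Lemma wmcE V a p : wmc V a p =
  \sum_(S <- fpowerset V | eval (fun i => i \in S) a) weight V S p.
Proof.
rewrite /wmc; apply: congr_big => // S _; rewrite /weight [in RHS](bigID (fun i => i \in S)) /=.
by congr (_ * _); apply: eq_bigr => i; [move=> -> | move=> /negbTE ->].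
Qed.

Lemma wmc_eq V a b p : (forall x, eval x a = eval x b) -> wmc V a p = wmc V b p.
Proof. by move=> H; rewrite !wmcE; apply: eq_bigl => S; rewrite H. Qed.

Lemma weight_ge0 V S p : unit_vec V p -> 0 <= weight V S p.
Proof.
move=> up; rewrite /weight big_seq; apply: prodr_ge0 => i /up /andP [h0 h1].
by case: (i \in S) => //; rewrite subr_ge0.
Qed.

Lemma wmc_ge0 V a p : unit_vec V p -> 0 <= wmc V a p.
Proof. by move=> up; rewrite wmcE; apply: sumr_ge0 => S _; apply: weight_ge0. Qed.

Lemma wmc_mono V a b p : unit_vec V p -> entails a b -> wmc V a p <= wmc V b p.
Proof.
move=> up ab; rewrite !wmcE [X in X <= _]big_mkcond [X in _ <= X]big_mkcond /=.
apply: ler_sum => S _; case Ea: (eval _ a); first by rewrite (ab _ Ea).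
by case: (eval _ b) => //; apply: weight_ge0.
Qed.

Lemma wmc_Or V a b p : (forall x, ~~ (eval x a && eval x b)) ->
  wmc V (Or a b) p = wmc V a p + wmc V b p.
Proof.
move=> dab; rewrite !wmcE !(big_mkcond (fun S => eval _ _)) -big_split /=.
apply: eq_bigr => S _; have := dab (fun i => i \in S).
by case: (eval _ a); case: (eval _ b); rewrite /= ?addr0 ?add0r.
Qed.

Lemma wmc_local V a p q : (forall i, i \in V -> p i = q i) -> wmc V a p = wmc V a q.
Proof.
move=> E; rewrite !wmcE; apply: eq_bigr => S _; rewrite /weight !big_seq.
by apply: eq_bigr => i /E ->.
Qed.

Lemma weight_U X Y S1 S2 p q : [disjoint X & Y]%fset ->
  (S1 `<=` X)%fset -> (S2 `<=` Y)%fset ->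
  weight (X `|` Y)%fset (S1 `|` S2)%fset (fun i => if i \in X then p i else q i)
  = weight X S1 p * weight Y S2 q.
Proof.
move=> dXY /fsubsetP s1 /fsubsetP s2; have dP := fdisjointP dXY.
rewrite /weight (perm_big _ (@fsetU_perm X Y dXY)) big_cat /=.
congr (_ * _); rewrite big_seq [in RHS]big_seq; apply: eq_bigr => i iV.
  rewrite iV in_fsetU; case: (i \in S2) / idP => [/s2|]; last by rewrite orbF.
  by move/negP: (dP _ iV).
have iX : i \in X = false by apply/negP => /dP; rewrite iV.
rewrite iX in_fsetU; case: (i \in S1) / idP => [/s1|//]; by rewrite iX.
Qed.

Lemma wmc_And X Y a b p q : [disjoint X & Y]%fset -> over X a -> over Y b ->
  wmc (X `|` Y)%fset (And a b) (fun i => if i \in X then p i else q i)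
  = wmc X a p * wmc Y b q.
Proof.
move=> dXY oa ob; have dP := fdisjointP dXY.
rewrite !wmcE big_mkcond sum_split //.
rewrite [X in _ = X * _]big_mkcond [X in _ = _ * X]big_mkcond big_distrl /=.
apply: eq_big_seq => S1 HS1; rewrite big_distrr /=.
apply: eq_big_seq => S2 HS2; move: HS1 HS2; rewrite !fpowersetE => h1 h2.
have e1 : eval (fun i => i \in (S1 `|` S2)%fset) a = eval (fun i => i \in S1) a.
  apply: (@eval_over X _ _ a oa) => i iX; rewrite in_fsetU.
  case: (i \in S2) / idP => [/(fsubsetP h2) iY|]; last by rewrite orbF.
  by move/negP: (dP _ iX).
have e2 : eval (fun i => i \in (S1 `|` S2)%fset) b = eval (fun i => i \in S2) b.
  apply: (@eval_over Y _ _ b ob) => i iY; rewrite in_fsetU.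
  case: (i \in S1) / idP => [/(fsubsetP h1) iX|//].
  by move/negP: (dP _ iX); rewrite iY.
rewrite /= e1 e2 weight_U //.
by case: (eval _ a); case: (eval _ b); rewrite ?mulr0 ?mul0r.
Qed.

Lemma wmc_1 x a p : wmc [fset x]%fset a p =
  (if eval (fun i => i \in (fset0 : {fset nat})) a then 1 - p x else 0) +
  (if eval (fun i => i \in [fset x]%fset) a then p x else 0).
Proof.
rewrite wmcE big_mkcond fpowerset1 big_fsetU1 ?big_seq_fset1 /=.
  by rewrite /weight !big_seq_fset1 in_fset1 eqxx.
rewrite in_fset1; apply/eqP => /fsetP /(_ x); by rewrite in_fset1 eqxx in_fset0.
Qed.

Lemma wmc_Tru V p : wmc V Tru p = 1.
Proof.
elim/fset1U_rect: V => [|x V xV IH].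
  by rewrite wmcE fpowerset0 big_seq_fset1 /weight big_seq_fset0.
have d : [disjoint [fset x] & V]%fset.
  by apply/fdisjointP => i; rewrite in_fset1 => /eqP ->.
have -> : p = (fun i => if i \in [fset x]%fset then p i else p i).
  by apply: funext => i; rewrite if_same.
rewrite (@wmc_eq _ _ (And Tru Tru)) // wmc_And // IH mulr1 wmc_1 /=.
exact: subrK.
Qed.

End W.

Section F.
Variable R : realType.
Implicit Types (p q : nat -> R) (V X Y S : {fset nat}).

Lemma sum_reindex V (f g : {fset nat} -> {fset nat}) (F : {fset nat} -> R) :
  (forall S, (S `<=` V)%fset -> (f S `<=` V)%fset) ->
  (forall S, (S `<=` V)%fset -> (g S `<=` V)%fset) ->
  (forall S, (S `<=` V)%fset -> g (f S) = S) ->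
  (forall S, (S `<=` V)%fset -> f (g S) = S) ->
  \sum_(S <- fpowerset V) F S = \sum_(S <- fpowerset V) F (f S).
Proof.
move=> fV gV fK gK.
rewrite (perm_big _ (@perm_inv _ (enum_fset (fpowerset V)) f g (fset_uniq _) _ _ _ _)).
- by rewrite big_map.
- by move=> S; rewrite !fpowersetE; apply: fV.
- by move=> S; rewrite !fpowersetE; apply: gV.
- by move=> S; rewrite fpowersetE; apply: fK.
- by move=> S; rewrite fpowersetE; apply: gK.
Qed.

Lemma wmc_Var x p : wmc [fset x]%fset (Var x) p = p x.
Proof. by rewrite wmc_1 /= in_fset1 eqxx add0r. Qed.

Lemma wmc_NegVar x p : wmc [fset x]%fset (Neg (Var x)) p = 1 - p x.
Proof. by rewrite wmc_1 /= in_fset1 eqxx addr0. Qed.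

Lemma wmc_state V (x : nat -> bool) : wmc V (state_sent V x) (state_vec R x) = 1.
Proof.
set S0 := [fset i in V | x i]%fset.
have S0E : forall i, (i \in S0) = (i \in V) && x i by move=> i; rewrite !inE.
have S0V : S0 \in fpowerset V.
  by rewrite fpowersetE; apply/fsubsetP => i; rewrite S0E => /andP[].
rewrite wmcE big_mkcond (bigD1_seq S0) ?fset_uniq //=.
rewrite big1_seq ?addr0.
  rewrite state_stl eval_stl.
  have -> : all (fun i => (i \in S0) == x i) (enum_fset V).
    by apply/allP => i iV; rewrite S0E iV.
  rewrite /weight big_seq big1 // => i iV; rewrite S0E iV /state_vec /=.
  by case: (x i); rewrite ?subrr ?subr0.
move=> S /andP [nS SV]; rewrite state_stl eval_stl.
case E: (all _ _) => //; exfalso; move/negP: nS; apply; apply/eqP/fsetP => i.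
move: SV; rewrite fpowersetE => /fsubsetP SV.
rewrite S0E; case iV: (i \in V) => /=.
  by move/allP: E => /(_ i iV) /eqP.
by apply/negP => /SV; rewrite iV.
Qed.

Lemma wmc_negvars V a p : over V a ->
  wmc V (negvars a) (fun i => 1 - p i) = wmc V a p.
Proof.
move=> oa; rewrite !wmcE !(big_mkcond (fun S => eval _ _)) /=.
rewrite (@sum_reindex V (fun S => V `\` S)%fset (fun S => V `\` S)%fset).
- apply: eq_big_seq => S; rewrite fpowersetE => /fsubsetP SV.
  rewrite eval_negvars.
  rewrite (@eval_over V _ (fun i => i \in S) a oa); last first.
    by move=> i iV; rewrite in_fsetD iV andbT negbK.
  congr (if _ then _ else _); rewrite /weight big_seq [in RHS]big_seq.
  apply: eq_bigr => i iV; rewrite in_fsetD iV andbT.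
  by case: (i \in S) => /=; rewrite ?subKr.
- by move=> S _; apply: fsubsetDl.
- by move=> S _; apply: fsubsetDl.
- by move=> S SV; rewrite fsetDK.
- by move=> S SV; rewrite fsetDK.
Qed.

Lemma img_mem V (f g : nat -> nat) S i :
  (forall i, i \in V -> g (f i) = i) -> (S `<=` V)%fset -> i \in V ->
  (f i \in [fset f j | j in S]%fset) = (i \in S).
Proof.
move=> fK /fsubsetP SV iV; apply/idP/idP; last by move=> iS; apply: in_imfset.
case/imfsetP => j /= jS E.
by rewrite -(fK _ iV) E fK // SV.
Qed.

Lemma img_sub V (f : nat -> nat) S :
  (forall i, i \in V -> f i \in V) -> (S `<=` V)%fset ->
  ([fset f j | j in S]%fset `<=` V)%fset.
Proof.
move=> fV /fsubsetP SV; apply/fsubsetP => k /imfsetP [j /= jS ->].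
by apply: fV; apply: SV.
Qed.

Lemma img_K V (f g : nat -> nat) S :
  (forall i, i \in V -> f i \in V) -> (forall i, i \in V -> g i \in V) ->
  (forall i, i \in V -> g (f i) = i) -> (forall i, i \in V -> f (g i) = i) ->
  (S `<=` V)%fset -> [fset g j | j in [fset f j | j in S]%fset]%fset = S.
Proof.
move=> fV gV fK gK SV; apply/fsetP => j.
case jV: (j \in V).
  have fjV : f j \in V by apply: fV.
  by rewrite -{1}(fK _ jV) (@img_mem V g f _ (f j) gK (@img_sub V f S fV SV) fjV)
    (@img_mem V f g S j fK SV jV).
have /fsubsetP := @img_sub V g _ gV (@img_sub V f S fV SV) => H.
case: (j \in S) / idP => [/(fsubsetP SV)|]; first by rewrite jV.
by move=> _; apply/negP => /H; rewrite jV.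
Qed.

Lemma prod_reindex V (f g : nat -> nat) (F : nat -> R) :
  (forall i, i \in V -> f i \in V) -> (forall i, i \in V -> g i \in V) ->
  (forall i, i \in V -> g (f i) = i) -> (forall i, i \in V -> f (g i) = i) ->
  \prod_(i <- V) F i = \prod_(i <- V) F (f i).
Proof.
move=> fV gV fK gK.
by rewrite (perm_big _ (@perm_inv _ (enum_fset V) f g (fset_uniq _) fV gV fK gK)) big_map.
Qed.

Lemma wmc_rename V a p (pi sigma : nat -> nat) :
  (forall i, i \in V -> pi i \in V) -> (forall i, i \in V -> sigma i \in V) ->
  (forall i, i \in V -> sigma (pi i) = i) -> (forall i, i \in V -> pi (sigma i) = i) ->
  over V a -> wmc V (rename pi a) (fun j => p (sigma j)) = wmc V a p.
Proof.
move=> piV sV piK sK oa; rewrite !wmcE !(big_mkcond (fun S => eval _ _)) /=.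
rewrite (@sum_reindex V (fun S => [fset pi j | j in S]%fset) (fun S => [fset sigma j | j in S]%fset)).
- apply: eq_big_seq => S; rewrite fpowersetE => SV.
  rewrite eval_rename.
  rewrite (@eval_over V _ (fun i => i \in S) a oa); last first.
    by move=> i iV; rewrite (@img_mem V pi sigma).
  congr (if _ then _ else _); rewrite /weight (@prod_reindex V pi sigma) //.
  rewrite big_seq [in RHS]big_seq; apply: eq_bigr => i iV.
  by rewrite (@img_mem V pi sigma) // piK.
- by move=> S SV; apply: img_sub.
- by move=> S SV; apply: img_sub.
- by move=> S SV; exact: (@img_K V pi sigma S piV sV piK sK SV).
- by move=> S SV; exact: (@img_K V sigma pi S sV piV sK piK SV).
Qed.

End F.

Section E.
Variable R : realType.
Local Open Scope ereal_scope.

Lemma cnlogE (c w : R) : (0 < c)%R ->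
  c%:E * nlog w = if w == 0%R then +oo else (c * - ln w)%:E.
Proof.
move=> c0; rewrite /nlog; case: eqP => _ //.
by rewrite gt0_muley ?lte_fin.
Qed.

Lemma cnlog_ninfty (c w : R) : (0 < c)%R -> c%:E * nlog w != -oo.
Proof. by move=> c0; rewrite cnlogE //; case: (w == 0%R). Qed.

Lemma epow_fin (K r : R) : (0 < K)%R -> epow K r%:E = expR (- r * ln K).
Proof. by move=> K0; rewrite /epow /powR (gt_eqF K0). Qed.

Lemma epow0 (K : R) : (0 < K)%R -> epow K 0 = 1%R.
Proof. by move=> K0; rewrite epow_fin // oppr0 mul0r expR0. Qed.

Lemma epowD (K : R) (x y : \bar R) : (0 < K)%R -> x != -oo -> y != -oo ->
  epow K (x + y) = (epow K x * epow K y)%R.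
Proof.
move=> K0; case: x => [r||] //; case: y => [s||] // _ _; rewrite ?mul0r ?mulr0 //.
by rewrite -EFinD !epow_fin // -expRD; congr expR; lra.
Qed.

Lemma epow_cnlog (K c w : R) : (0 < K)%R -> (0 < c)%R -> (c * ln K = 1)%R ->
  (0 <= w)%R -> epow K (c%:E * nlog w) = w.
Proof.
move=> K0 c0 cK w0; rewrite cnlogE //; case: eqP => [-> //|/eqP wn0].
rewrite epow_fin // -[X in _ = X]lnK; last by rewrite posrE lt_neqAle eq_sym wn0.
by congr expR; transitivity (ln w * (c * ln K))%R; [ring | by rewrite cK mulr1].
Qed.

Lemma cnlogM (c u v : R) : (0 < c)%R -> (0 <= u)%R -> (0 <= v)%R ->
  c%:E * nlog (u * v) = c%:E * nlog u + c%:E * nlog v.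
Proof.
move=> c0 u0 v0; rewrite !cnlogE //.
have [->|un0] := eqVneq u 0%R; first by rewrite mul0r eqxx; case: eqP.
have [->|vn0] := eqVneq v 0%R; first by rewrite mulr0 eqxx.
rewrite mulf_eq0 (negbTE un0) (negbTE vn0) /= -EFinD lnM //; last first.
- by rewrite posrE lt_neqAle eq_sym vn0.
- by rewrite posrE lt_neqAle eq_sym un0.
by congr EFin; ring.
Qed.

Lemma cnlog_anti (c u v : R) : (0 < c)%R -> (0 <= u)%R -> (u <= v)%R ->
  c%:E * nlog v <= c%:E * nlog u.
Proof.
move=> c0 u0 uv; rewrite !cnlogE //.
have [u0e|un0] := eqVneq u 0%R; first by rewrite leey.
have up : (0 < u)%R by rewrite lt_neqAle eq_sym un0.
have vp : (0 < v)%R by apply: lt_le_trans uv.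
rewrite gt_eqF // lee_fin ler_pM2l // lerN2 ler_ln // posrE //.
Qed.

Lemma cnlog1 (c : R) : (0 < c)%R -> c%:E * nlog 1 = 0.
Proof. by move=> c0; rewrite cnlogE // oner_eq0 ln1 oppr0 mulr0. Qed.

End E.

Section Fwd.
Variable R : realType.

Lemma wmc_le1 V a (p : nat -> R) : unit_vec V p -> wmc V a p <= 1.
Proof. by move=> up; rewrite -(@wmc_Tru R V p); apply: wmc_mono. Qed.

Lemma forward (c : R) : 0 < c -> is_loss (Lsem c) /\ axioms (Lsem c).
Proof.
move=> c0; split; [split|].
  by move=> V a p _; apply: cnlog_ninfty.
  by move=> V a p q _ _ E; rewrite /Lsem (@wmc_local R V a p q E).
rewrite /axioms /Lsem; split; [|split; [|split; [|split; [|split; [|split; [|split]]]]]].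
- by move=> V p _; rewrite wmc_Tru cnlog1.
- move=> X Y a b p q dXY [oa up] [ob uq]; rewrite wmc_And // cnlogM //; exact: wmc_ge0.
- move=> V a b p [oa up] ob ab; apply: cnlog_anti => //; first exact: wmc_ge0.
  exact: wmc_mono.
- by move=> V x; rewrite wmc_state cnlog1.
- by move=> X; exists c, c => p _; rewrite wmc_Var wmc_NegVar.
- by move=> V a p [oa up]; rewrite wmc_negvars.
- by move=> V a p pi sigma piV sV piK sK [oa up]; rewrite wmc_rename.
- exists (expR c^-1); split; first exact: expR_gt0.
  move=> V a b p [oa up] ob dab; rewrite wmc_Or // !epow_cnlog //;
    rewrite ?expR_gt0 ?expRK ?divff ?gt_eqF //; try exact: wmc_ge0.
  by apply: addr_ge0; apply: wmc_ge0.
Qed.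
End Fwd.

Section Conv.
Variable R : realType.
Variable L : lossT R.
Hypothesis ninf : forall V a p, valid V a p -> L V a p != -oo%E.
Hypothesis H1 : A1 L.
Hypothesis H2 : A2 L.
Hypothesis H3 : A3 L.
Hypothesis H5 : A5 L.
Hypothesis H6 : A6 L.
Variable K : R.
Hypothesis K0 : 0 < K.
Hypothesis H8 : forall V a b p, valid V a p -> over V b ->
      (forall x : nat -> bool, ~~ (eval x a && eval x b)) ->
      epow K (L V (Or a b) p) = (epow K (L V a p) + epow K (L V b p))%R.

Lemma L_equiv V a b p : over V a -> over V b -> unit_vec V p ->
  (forall x, eval x a = eval x b) -> L V a p = L V b p.
Proof.
move=> oa ob up E; apply/eqP; rewrite eq_le; apply/andP; split.
  by apply: H3 => // x; rewrite E.
by apply: H3 => // x; rewrite E.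
Qed.

Lemma epow_Fls V p : unit_vec V p -> epow K (L V Fls p) = 0.
Proof.
move=> up.
have oF : over V Fls by move=> i.
have := @H8 V Fls Fls p (conj oF up) oF (fun x => erefl).
rewrite (@L_equiv V (Or Fls Fls) Fls) // => E.
lra.
Qed.

Lemma lit_const i : exists ci : R, 0 < ci /\ ci * ln K = 1 /\
  forall p : nat -> R, 0 <= p i <= 1 ->
    L [fset i]%fset (Var i) p = (ci%:E * nlog (p i))%E /\
    L [fset i]%fset (Neg (Var i)) p = (ci%:E * nlog (1 - p i))%E.
Proof.
have [K1 [K2 H]] := H5 i.
set h : nat -> R := fun _ => 2^-1.
have h01 : 0 <= h i <= 1 by rewrite /h; apply/andP; split; lra.
have uh : unit_vec [fset i]%fset h by move=> j _; exact: h01.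
have l2 : 0 < ln (2 : R) by apply: ln_gt0; lra.
have nh : nlog (2^-1 : R) = (ln 2)%:E.
  rewrite /nlog invr_eq0 pnatr_eq0 /= lnV ?opprK // posrE; lra.
have e1 : 1 - 2^-1 = 2^-1 :> R by lra.
have [HV HN] := H h h01.
rewrite /h e1 nh in HV HN.
have oV : over [fset i]%fset (Var i) by move=> j; rewrite /= inE => /eqP ->; rewrite in_fset1.
have oN : over [fset i]%fset (Neg (Var i)) by exact: oV.
have oT : over [fset i]%fset Tru by move=> j.
have K12 : K1 = K2.
  have := H6 _ _ _ (conj oV uh); rewrite /= HV.
  have [_ HN'] := H (fun j => 1 - h j) ltac:(rewrite /h; apply/andP; split; lra).
  rewrite HN' /h e1 e1 nh => /eqP; rewrite eqe => /eqP.
  by move/(mulIf (lt0r_neq0 l2)).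
subst K2.
have eT : L [fset i]%fset (Or (Var i) (Neg (Var i))) h = 0.
  rewrite -(H1 _ _ uh); apply: L_equiv => //.
    by move=> j; rewrite /= !inE orbb => /eqP ->.
  by move=> x /=; case: (x i).
have := H8 _ _ _ _ (conj oV uh) oN (fun x => ltac:(by rewrite /=; case: (x i)) ).
rewrite eT epow0 // HV HN -EFinM epow_fin // => E.
have E2 : expR (- (K1 * ln 2) * ln K) = 2^-1 by lra.
have E3 : - (K1 * ln 2) * ln K = - ln (2 : R).
  by rewrite -lnV ?posrE; [rewrite -E2 expRK | lra].
have cK : K1 * ln K = 1.
  apply: (mulIf (lt0r_neq0 l2)); rewrite mul1r; lra.
have c0 : 0 <= K1.
  have := H3 _ _ _ _ (conj oV uh) oT (fun x _ => erefl).
  rewrite H1 // HV -EFinM lee_fin => Hc.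
  by rewrite -(pmulr_lge0 _ l2).
exists K1; split; last split => //.
rewrite lt_neqAle c0 andbT; apply/eqP => E0; move: cK; rewrite -E0 mul0r; lra.
Qed.

Lemma lit_epow i (p : nat -> R) (b : bool) : 0 <= p i <= 1 ->
  epow K (L [fset i]%fset (if b then Var i else Neg (Var i)) p) =
  (if b then p i else 1 - p i).
Proof.
move=> /andP [p0 p1]; have [ci [c0 [cK H]]] := lit_const i.
have [HV HN] := H p (introT andP (conj p0 p1)).
case: b; [rewrite HV | rewrite HN]; apply: epow_cnlog => //.
by rewrite subr_ge0.
Qed.

Lemma state_epow (l : seq nat) : uniq l -> forall (W : {fset nat}), W =i l ->
  forall x (p : nat -> R), unit_vec W p ->
  epow K (L W (stl l x) p) = \prod_(i <- l) (if x i then p i else 1 - p i).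
Proof.
elim: l => [|i l IH] ul W Wl x p up.
  have -> : W = fset0 by apply/fsetP => j; rewrite Wl in_fset0.
  by rewrite big_nil /= H1 ?epow0 //.
move: ul => /= /andP [il ul].
set W' := seq_fset tt l.
have W'l : W' =i l by apply: seq_fsetE.
have WE : W = ([fset i] `|` W')%fset.
  by apply/fsetP => j; rewrite Wl in_fsetU in_fset1 W'l inE.
have d : [disjoint [fset i] & W']%fset.
  by apply/fdisjointP => j; rewrite in_fset1 => /eqP ->; rewrite W'l.
have ui : unit_vec [fset i]%fset p by move=> j; rewrite in_fset1 => /eqP ->; apply: up; rewrite Wl inE eqxx.
have uW' : unit_vec W' p by move=> j; rewrite W'l => jl; apply: up; rewrite Wl inE jl orbT.
have ol : over [fset i]%fset (if x i then Var i else Neg (Var i)).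
  by case: (x i) => j /=; rewrite inE => /eqP ->; rewrite in_fset1.
have orest : over W' (stl l x) by move=> j /vars_stl; rewrite W'l.
have := H2 _ _ _ _ p p d (conj ol ui) (conj orest uW').
have -> : (fun j => if j \in [fset i]%fset then p j else p j) = p.
  by apply: funext => j; rewrite if_same.
rewrite -WE /= => ->; rewrite epowD //; last first.
- exact: ninf.
- exact: ninf.
rewrite lit_epow ?(IH ul W' W'l x p uW') ?big_cons //.
by apply: ui; rewrite in_fset1.
Qed.

Lemma stateS_epow V (S : {fset nat}) (p : nat -> R) : unit_vec V p ->
  epow K (L V (state_sent V (fun i => i \in S)) p) = @weight R V S p.
Proof. by move=> up; rewrite state_stl (@state_epow _ (fset_uniq V) V). Qed.

Lemma disj_epow V (p : nat -> R) : unit_vec V p -> forall l : seq {fset nat},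
  uniq l -> all (fun S => (S `<=` V)%fset) l ->
  epow K (L V (disj (map (fun S : {fset nat} => state_sent V (fun i => i \in S)) l)) p)
  = \sum_(S <- l) @weight R V S p.
Proof.
move=> up; elim => [|S l IH] /=; first by rewrite big_nil epow_Fls.
move=> /andP [Sl ul] /andP [SV lV].
have orest : over V (disj (map (fun S : {fset nat} => state_sent V (fun i => i \in S)) l)).
  by apply: over_disj => T _; apply: over_state.
rewrite H8 //; last first.
  move=> x; apply/negP => /andP [].
  rewrite state_stl eval_stl eval_disj has_map => /allP E1 /hasP [T Tl].
  rewrite /preim /= state_stl eval_stl => /allP E2.
  move/negP: Sl; apply; suff -> : S = T by [].
  move/allP: lV => /(_ T Tl) /fsubsetP TV; move/fsubsetP: SV => SV.
  apply/fsetP => j; case jV: (j \in V).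
    by move: (E1 j jV) (E2 j jV) => /eqP <- /eqP.
  apply/idP/idP => [/SV|/TV]; by rewrite jV.
- by split => //; apply: over_state.
- by rewrite big_cons stateS_epow // IH.
Qed.

Lemma main_epow V a p : valid V a p -> epow K (L V a p) = wmc V a p.
Proof.
move=> [oa up].
set l := [seq S <- enum_fset (fpowerset V) | eval (fun i => i \in S) a].
set D := disj (map (fun S : {fset nat} => state_sent V (fun i => i \in S)) l).
have oD : over V D by apply: over_disj => T _; apply: over_state.
have -> : L V a p = L V D p.
  apply: L_equiv => // x; apply/idP/idP.
    move=> Ea; rewrite eval_disj has_map; apply/hasP.
    exists [fset i in V | x i]%fset.
      rewrite mem_filter fpowersetE; apply/andP; split.
        rewrite (@eval_over V _ x a oa) // => i iV.
        by rewrite !inE iV.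
      by apply/fsubsetP => i; rewrite !inE => /andP [].
    rewrite /preim /= state_stl eval_stl; apply/allP => i iV.
    by rewrite !inE iV.
  rewrite eval_disj has_map => /hasP [T]; rewrite mem_filter => /andP [Ea _].
  rewrite /preim /= state_stl eval_stl => /allP E.
  rewrite (@eval_over V x (fun i => i \in T) a oa) // => i iV.
  by apply/eqP; apply: E.
rewrite disj_epow //.
- by rewrite wmcE big_filter.
- by apply: filter_uniq; apply: fset_uniq.
- by apply/allP => T; rewrite mem_filter fpowersetE => /andP [].
Qed.

Lemma conv_main : exists c : R, 0 < c /\
  forall V a p, valid V a p -> L V a p = Lsem c V a p.
Proof.
have [c [c0 [cK _]]] := lit_const 0.
exists c; split => // V a p vp.
have E := @main_epow V a p vp.
have nI := ninf _ _ _ vp.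
rewrite /Lsem cnlogE //.
case E1: (L V a p) => [r||]; rewrite E1 in E nI => //.
  rewrite epow_fin // in E.
  rewrite -E gt_eqF ?expR_gt0 // expRK; congr EFin.
  by transitivity (r * (c * ln K)); [rewrite cK mulr1 | ring].
by rewrite -E /= eqxx.
Qed.

End Conv.

Lemma converse (R : realType) (L : lossT R) : is_loss L -> axioms L ->
  exists c : R, 0 < c /\ forall V a p, valid V a p -> L V a p = Lsem c V a p.
Proof.
move=> [ninf loc] [H1 [H2 [H3 [H4 [H5 [H6 [H7 [K [K0 H8]]]]]]]]].
exact: (@conv_main R L ninf H1 H2 H3 H5 H6 K K0 H8).
Qed.

Theorem theorem1 (R : realType) :
  (forall c : R, 0 < c -> is_loss (Lsem c) /\ axioms (Lsem c)) /\
  (forall L : lossT R, is_loss L -> axioms L ->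
     exists c : R, 0 < c /\
       forall V a p, valid V a p -> L V a p = Lsem c V a p).
Proof.
split; first exact: forward.
exact: converse.
Qed.
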